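(* Let $\phi_*\in(0,\pi/2)$, $R\ge r=1$, and consider the billiard map on $Q(\phi_*,R)$. For $x\in M_r$ with $n_1=0$, writing $\tau_0=|p(x_0)p(x_1)|$ and $\tau_1=|p(x_1)p(x_2)|$, one has $\tau_0+\tau_1>2d_0$, $\tau_0+\tau_1>2d_2$, and hence $\tau_0+\tau_1>d_0+d_2$.
   Context: Setting: $r=1$, $Q(\phi_*,R)=D(O_r,r)\cap D(O_R,R)$ with $|O_rO_R|=\sqrt{R^2-r^2\sin^2\phi_*}-r\cos\phi_*$; its boundary consists of $\Gamma_r$ (the major arc of $\partial D(O_r,r)$ with position angles $[\phi_*,2\pi-\phi_*]$) and $\Gamma_R\subset\partial D(O_R,R)$. Phase space $M=M_r\sqcup M_R$, coordinates $(\phi,\theta)$ with $\theta\in(0,\pi)$ the angle from the positive tangent direction; $p(x)$ the base point; $F$ the billiard map. $M_r^{out}=M_r\cap F^{-1}(M_R)$, $M_R^{out}=M_R\cap F^{-1}(M_r)$. For $x\in M_r$: $x_0=F^{n_0}x$ with $n_0=\inf\{n\ge0:F^nx\in M_r^{out}\}$, $x_1=Fx_0$, $n_1=\inf\{n\ge0:F^nx_1\in M_R^{out}\}$, $x_2=F^{n_1+1}x_1$; $d_0=r\sin\theta(x_0)$, $d_2=r\sin\theta(x_2)$. *)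

(* Defs.v *)
From Stdlib Require Import Reals Lra.
Open Scope R_scope.

(* Billiard in Q(phi_star, R) = D(O_r,1) ∩ D(O_R,R), r = 1.
   Coordinates: O_r = (0,0), O_R = (-c, 0) with
   c = |O_r O_R| = sqrt(R^2 - sin^2 phi_star) - cos phi_star.
   The corners are (cos phi_star, ± sin phi_star); Gamma_r is the unit-circle arc with
   position angles [phi_star, 2 pi - phi_star]; Gamma_R is the arc of the circle
   of radius R about O_R with position angles [-psi_star, psi_star],
   psi_star = asin (sin phi_star / R), i.e. the part of dD(O_R,R) on dQ. *)

Definition pt := (R * R)%type.

Definition cdist (ps Rb : R) : R := sqrt (Rb ^ 2 - (sin ps) ^ 2) - cos ps.
Definition psist (ps Rb : R) : R := asin (sin ps / Rb).

(* A phase point: side = true for M_r, false for M_R; ang = position angle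
   phi on the corresponding circle (about O_r resp. O_R); th = theta. *)
Record PS := mkPS { side : bool; ang : R; th : R }.

Definition bpos (ps Rb : R) (x : PS) : pt :=
  if side x then (cos (ang x), sin (ang x))
  else (- cdist ps Rb + Rb * cos (ang x), Rb * sin (ang x)).

Definition tang (x : PS) : pt := (- sin (ang x), cos (ang x)).
Definition nrm (x : PS) : pt := (- cos (ang x), - sin (ang x)).

(* unit velocity making angle theta with the positive tangent, pointing inward *)
Definition vel (x : PS) : pt :=
  (cos (th x) * fst (tang x) + sin (th x) * fst (nrm x),
   cos (th x) * snd (tang x) + sin (th x) * snd (nrm x)).

Definition padd (p q : pt) : pt := (fst p + fst q, snd p + snd q).
Definition pscal (t : R) (p : pt) : pt := (t * fst p, t * snd p).
Definition dot (p q : pt) : R := fst p * fst q + snd p * snd q.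
Definition edist (p q : pt) : R :=
  sqrt ((fst p - fst q) ^ 2 + (snd p - snd q) ^ 2).

Definition InM (ps Rb : R) (x : PS) : Prop :=
  0 < th x < PI /\
  (if side x then ps <= ang x <= 2 * PI - ps
   else - psist ps Rb <= ang x <= psist ps Rb).
Definition InMr (ps Rb : R) (x : PS) : Prop := side x = true /\ InM ps Rb x.
Definition InMR (ps Rb : R) (x : PS) : Prop := side x = false /\ InM ps Rb x.

(* base point not a corner (the billiard map is undefined at corner hits) *)
Definition NonCorner (ps Rb : R) (x : PS) : Prop :=
  if side x then ps < ang x < 2 * PI - ps
  else - psist ps Rb < ang x < psist ps Rb.

Definition InQint (ps Rb : R) (q : pt) : Prop :=
  fst q ^ 2 + snd q ^ 2 < 1 /\
  (fst q + cdist ps Rb) ^ 2 + snd q ^ 2 < Rb ^ 2.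

Definition Step (ps Rb : R) (x y : PS) : Prop :=
  InM ps Rb x /\ InM ps Rb y /\ NonCorner ps Rb y /\
  exists t : R, 0 < t /\
    bpos ps Rb y = padd (bpos ps Rb x) (pscal t (vel x)) /\
    (forall s, 0 < s < t -> InQint ps Rb (padd (bpos ps Rb x) (pscal s (vel x)))) /\
    vel y = padd (vel x) (pscal (- 2 * dot (vel x) (nrm y)) (nrm y)).

Inductive Iter (ps Rb : R) : nat -> PS -> PS -> Prop :=
| Iter0 : forall x, Iter ps Rb O x x
| IterS : forall n x y z, Step ps Rb x y -> Iter ps Rb n y z -> Iter ps Rb (S n) x z.

Definition InMrOut (ps Rb : R) (x : PS) : Prop :=
  InMr ps Rb x /\ exists y, Step ps Rb x y /\ InMR ps Rb y.
Definition InMROut (ps Rb : R) (x : PS) : Prop :=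
  InMR ps Rb x /\ exists y, Step ps Rb x y /\ InMr ps Rb y.

(* Main.v *)
Require Import Defs.
From Stdlib Require Import Reals Lra Psatz.
Open Scope R_scope.

Lemma dot_l p t v w : dot (padd p (pscal t v)) w = dot p w + t * dot v w.
Proof. destruct p, v, w; unfold dot, padd, pscal; simpl; ring. Qed.
Lemma dot_r p t v w : dot w (padd p (pscal t v)) = dot w p + t * dot w v.
Proof. destruct p, v, w; unfold dot, padd, pscal; simpl; ring. Qed.
Lemma dot_sym p q : dot p q = dot q p.
Proof. destruct p, q; unfold dot; simpl; ring. Qed.

Lemma vel_unit x : dot (vel x) (vel x) = 1.
Proof.
  unfold dot, vel, tang, nrm; simpl.
  pose proof (sin2_cos2 (th x)); pose proof (sin2_cos2 (ang x)). unfold Rsqr in *.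
  transitivity ((sin (th x) * sin (th x) + cos (th x) * cos (th x)) *
     (sin (ang x) * sin (ang x) + cos (ang x) * cos (ang x))); [ring|].
  rewrite H, H0; ring.
Qed.
Lemma nrm_unit x : dot (nrm x) (nrm x) = 1.
Proof.
  unfold dot, nrm; simpl. pose proof (sin2_cos2 (ang x)). unfold Rsqr in *. nra.
Qed.
Lemma vel_nrm x : dot (vel x) (nrm x) = sin (th x).
Proof.
  unfold dot, vel, tang, nrm; simpl.
  pose proof (sin2_cos2 (ang x)). unfold Rsqr in *.
  transitivity (sin (th x) * (sin (ang x) * sin (ang x) + cos (ang x) * cos (ang x))); [ring|].
  rewrite H; ring.
Qed.
Lemma refl_dot v y : vel y = padd v (pscal (- 2 * dot v (nrm y)) (nrm y)) ->
  dot v (nrm y) = - sin (th y).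
Proof.
  intro H. rewrite <- vel_nrm, H, dot_l, nrm_unit. ring.
Qed.

Lemma edist_step p t v : 0 <= t -> dot v v = 1 -> edist p (padd p (pscal t v)) = t.
Proof.
  intros Ht Hv. destruct p, v; unfold edist, padd, pscal, dot in *; simpl in *.
  match goal with |- sqrt ?e = _ => replace e with (t^2) by (transitivity (t^2*(r1*r1+r2*r2)); [rewrite Hv; ring| ring]) end.
  apply sqrt_pow2; auto.
Qed.

Lemma final t0 t1 d0 d2 : 0 < t0 -> 0 < t1 -> 0 < d0 -> 0 < d2 -> t0 <= 2 * d0 ->
  d2 - t1 < t0 - d0 -> t0^2 - 2*t0*d0 = t1^2 - 2*t1*d2 ->
  t0 + t1 > 2 * d0 /\ t0 + t1 > 2 * d2 /\ t0 + t1 > d0 + d2.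
Proof.
  intros.
  set (a := t0 - d0). set (b := d2 - t1).
  assert (E : (a - b) * (a + b) = (d0 - d2) * (d0 + d2)) by (unfold a, b; nra).
  assert (Ha : a <= d0) by (unfold a; lra).
  assert (Ha2 : - d0 < a) by (unfold a; lra).
  assert (Hb : b < d2) by (unfold b; lra).
  assert (Hab : b < a) by (unfold a, b; lra).
  assert (Hb2 : - d2 <= b) by (unfold a, b in *; nra).
  split; [|split].
  - assert (a - b > d0 - d2); [|unfold a, b in *; lra].
    destruct (Rle_or_lt (a - b) (d0 - d2)) as [h|h]; [|lra]. exfalso.
    destruct (Rle_or_lt (a + b) 0); nra.
  - assert (a - b > d2 - d0); [|unfold a, b in *; lra].
    destruct (Rle_or_lt (a - b) (d2 - d0)) as [h|h]; [|lra]. exfalso.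
    destruct (Rle_or_lt 0 (a + b)); nra.
  - unfold a, b in *; lra.
Qed.

Lemma dot_pscal k p q : dot (pscal k p) q = k * dot p q.
Proof. destruct p, q; unfold dot, pscal; simpl; ring. Qed.
Lemma sq_dot q : fst q ^ 2 + snd q ^ 2 = dot q q.
Proof. unfold dot; ring. Qed.

Lemma bpos_true ps Rb x : side x = true -> bpos ps Rb x = pscal (-1) (nrm x).
Proof. intro H; unfold bpos, pscal, nrm; rewrite H; simpl; f_equal; ring. Qed.

Theorem mainTheorem8 :
  forall (ps Rb : R), 0 < ps < PI / 2 -> 1 <= Rb ->
  forall (x x0 x1 x2 : PS) (n0 : nat),
    InMr ps Rb x ->
    Iter ps Rb n0 x x0 -> InMrOut ps Rb x0 ->
    (forall (n : nat) (z : PS), (n < n0)%nat -> Iter ps Rb n x z -> ~ InMrOut ps Rb z) ->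
    Step ps Rb x0 x1 ->
    InMROut ps Rb x1 ->
    Step ps Rb x1 x2 ->
    let tau0 := edist (bpos ps Rb x0) (bpos ps Rb x1) in
    let tau1 := edist (bpos ps Rb x1) (bpos ps Rb x2) in
    let d0 := 1 * sin (th x0) in
    let d2 := 1 * sin (th x2) in
    tau0 + tau1 > 2 * d0 /\ tau0 + tau1 > 2 * d2 /\ tau0 + tau1 > d0 + d2.
Proof.
  intros ps Rb Hps HR x x0 x1 x2 n0 _ _ Hx0 _ H01 Hx1 H12 tau0 tau1 d0 d2.
  destruct Hx0 as [[Hs0 HM0] _].
  destruct H01 as [_ [HM1 [_ [t0 [Ht0 [Hp1 [Hint0 Hv1]]]]]]].
  destruct Hx1 as [[Hs1 _] [y [H1y [Hsy HMy]]]].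
  destruct H12 as [_ [HM2 [HNC2 [t1 [Ht1 [Hp2 [Hint1 Hv2]]]]]]].
  destruct H1y as [_ [_ [_ [ty [Hty [Hpy [Inty _]]]]]]].
  assert (Hd0 : 0 < d0) by (unfold d0; destruct HM0 as [[? ?] _]; rewrite Rmult_1_l; apply sin_gt_0; auto).
  assert (Hd2 : 0 < d2) by (unfold d2; destruct HM2 as [[? ?] _]; rewrite Rmult_1_l; apply sin_gt_0; auto).
  assert (Hs1p : 0 < sin (th x1)) by (destruct HM1 as [[? ?] _]; apply sin_gt_0; auto).
  assert (Etau0 : tau0 = t0) by (unfold tau0; rewrite Hp1; apply edist_step; [lra| apply vel_unit]).
  assert (Etau1 : tau1 = t1) by (unfold tau1; rewrite Hp2; apply edist_step; [lra| apply vel_unit]).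
  rewrite Etau0, Etau1.
  assert (Hsp : 0 < sin ps) by (apply sin_gt_0; lra).
  assert (Hcp : 0 < cos ps) by (apply cos_gt_0; lra).
  assert (Hsc : sin ps ^ 2 + cos ps ^ 2 = 1) by (pose proof (sin2_cos2 ps); unfold Rsqr in *; nra).
  set (q := sqrt (Rb ^ 2 - sin ps ^ 2)).
  assert (Hq2 : q * q = Rb ^ 2 - sin ps ^ 2) by (unfold q; apply sqrt_sqrt; nra).
  assert (Hq0 : 0 <= q) by (unfold q; apply sqrt_pos).
  assert (HqR : q <= Rb) by nra.
  assert (Hc : cdist ps Rb = q - cos ps) by reflexivity.
  set (c := cdist ps Rb) in *.
  set (p0 := bpos ps Rb x0) in *. set (p1 := bpos ps Rb x1) in *. set (p2 := bpos ps Rb x2) in *.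
  set (v0 := vel x0) in *. set (v1 := vel x1) in *.
  assert (B0 : p0 = pscal (-1) (nrm x0)) by (apply bpos_true; auto).
  assert (A1 : dot p0 v0 = - d0) by (rewrite B0, dot_pscal, dot_sym; unfold v0; rewrite vel_nrm; unfold d0; ring).
  assert (A2 : dot p0 p0 = 1) by (rewrite B0, dot_pscal, dot_sym, dot_pscal, nrm_unit; ring).
  assert (V0 : dot v0 v0 = 1) by apply vel_unit.
  assert (V1 : dot v1 v1 = 1) by apply vel_unit.
  assert (K1 : dot v0 (nrm x1) = - sin (th x1)) by (apply refl_dot; auto).
  assert (K2 : dot v1 (nrm x2) = - d2) by (unfold d2; rewrite Rmult_1_l; apply refl_dot; auto).
  assert (D : dot p1 (nrm x1) < 0).
  { unfold p1, bpos, nrm, dot; rewrite Hs1; simpl.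
    pose proof (sin2_cos2 (ang x1)) as E; unfold Rsqr in E.
    pose proof (COS_bound (ang x1)).
    assert (c < Rb) by lra. assert (cos ps < 1) by nra. assert (- c < Rb) by lra.
    fold c. destruct (Rle_or_lt 0 c); nra. }
  assert (B2 : p2 = pscal (-1) (nrm x2)).
  { destruct (side x2) eqn:Hs2; [apply bpos_true; auto|].
    assert (Epy : p2 = bpos ps Rb y).
    { destruct (Rtotal_order t1 ty) as [h|[h|h]].
      - exfalso. destruct (Inty t1 (conj Ht1 h)) as [_ h2].
        fold v1 in h2. rewrite <- Hp2 in h2. unfold p2, bpos in h2; rewrite Hs2 in h2; simpl in h2.
        pose proof (sin2_cos2 (ang x2)) as E; unfold Rsqr in E. fold c in h2. nra.
      - rewrite Hp2, Hpy, h; reflexivity.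
      - exfalso. destruct (Hint1 ty (conj Hty h)) as [h2 _].
        fold v1 in Hpy. fold p1 in Hpy. rewrite <- Hpy in h2. unfold bpos in h2; rewrite Hsy in h2; simpl in h2.
        pose proof (sin2_cos2 (ang y)) as E; unfold Rsqr in E. nra. }
    assert (U : fst p2 ^ 2 + snd p2 ^ 2 = 1).
    { rewrite Epy; unfold bpos; rewrite Hsy; simpl. pose proof (sin2_cos2 (ang y)) as E; unfold Rsqr in E. nra. }
    unfold p2, bpos in U; rewrite Hs2 in U; simpl in U. fold c in U.
    pose proof (sin2_cos2 (ang x2)) as E; unfold Rsqr in E.
    destruct (Rle_or_lt c 0) as [hc|hc].
    - assert (HR1 : Rb = 1) by nra.
      assert (Hc0 : c = 0) by nra.
      unfold p2, bpos, pscal, nrm; rewrite Hs2; simpl. fold c. rewrite Hc0, HR1. f_equal; ring.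
    - exfalso.
      unfold NonCorner in HNC2; rewrite Hs2 in HNC2.
      set (psi := psist ps Rb) in *.
      set (w := sin ps / Rb) in *.
      assert (Hw : w * Rb = sin ps) by (unfold w; field; lra).
      assert (sin ps < 1) by nra. assert (Hw1 : 0 < w <= 1) by (split; nra).
      assert (Hcpsi : cos psi = sqrt (1 - w²)) by (apply cos_asin; lra).
      assert (Hcw : sqrt (1 - w²) * sqrt (1 - w²) = 1 - w²) by (apply sqrt_sqrt; unfold Rsqr; nra).
      assert (Hcw0 : 0 <= sqrt (1 - w²)) by apply sqrt_pos.
      pose proof (asin_bound w) as Hab. assert (Hpsi : psi = asin w) by reflexivity. rewrite <- Hpsi in Hab. pose proof PI_RGT_0.
      assert (Hcb : cos psi < cos (ang x2)).
      { destruct (Rle_or_lt 0 (ang x2)).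
        - apply cos_decreasing_1; lra.
        - rewrite <- (cos_neg (ang x2)). apply cos_decreasing_1; lra. }
      rewrite Hcpsi in Hcb. unfold Rsqr in *.
      set (W := sqrt (1 - w * w)) in *.
      assert (HRW : Rb * W * (Rb * W) = q * q).
      { transitivity (Rb ^ 2 - (w * Rb) ^ 2); [| rewrite Hw; lra].
        transitivity (Rb * Rb * (W * W)); [ring|]. rewrite Hcw. ring. }
      assert (HRW2 : Rb * W = q).
      { apply Rsqr_inj; unfold Rsqr; auto. apply Rmult_le_pos; lra. }
      assert (Rb * cos (ang x2) > q).
      { rewrite <- HRW2. apply Rmult_lt_compat_l; lra. }
      nra. }
  assert (T0 : t0 <= 2 * d0).
  { destruct (Rle_or_lt t0 (2 * d0)) as [h|h]; auto. exfalso.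
    set (s := (t0 + 2 * d0) / 2).
    destruct (Hint0 s) as [h2 _]; [unfold s; lra|].
    rewrite sq_dot, dot_l, dot_r, dot_r, A1, A2, V0, dot_sym, A1 in h2. unfold s in h2. nra. }
  assert (Ea : dot p1 v0 = t0 - d0) by (rewrite Hp1, dot_l, A1, V0; ring).
  assert (Epp1 : dot p1 p1 = 1 - 2 * t0 * d0 + t0 ^ 2)
    by (rewrite Hp1, dot_l, dot_r, dot_r, A1, A2, V0, dot_sym, A1; ring).
  assert (Hv1' : v1 = padd v0 (pscal (- 2 * dot v0 (nrm x1)) (nrm x1))) by exact Hv1.
  assert (Eb : dot p1 v1 = t0 - d0 + 2 * sin (th x1) * dot p1 (nrm x1))
    by (rewrite Hv1', dot_r, Ea, K1; ring).
  assert (E2 : dot p2 v1 = d2) by (rewrite B2, dot_pscal, dot_sym, K2; ring).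
  assert (E2' : dot p2 v1 = dot p1 v1 + t1) by (rewrite Hp2, dot_l, V1; ring).
  assert (Epp2 : dot p2 p2 = 1) by (rewrite B2, dot_pscal, dot_sym, dot_pscal, nrm_unit; ring).
  assert (Epp2' : dot p2 p2 = dot p1 p1 + 2 * t1 * dot p1 v1 + t1 ^ 2)
    by (rewrite Hp2, dot_l, dot_r, dot_r, V1, (dot_sym v1 p1); ring).
  apply final; try lra.
  - assert (0 < 2 * sin (th x1) * - dot p1 (nrm x1)) by (apply Rmult_lt_0_compat; lra). lra.
  - nra.
Qed.
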